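(* Let $d\ge1$ and let $\tau$ be a (closed) simplex in $\mathbb{R}^d$. Then the characteristic function $\chi_\tau$ of $\tau$ can be written as a function in $\mathrm{HNN}_k$ with $k\sim\mathcal O(\lceil\log_2(d+1)\rceil)$ and size $s\sim\mathcal O(2(d+1))$.
   Context: $\mathrm{HNN}_k$ denotes the class of functions $f:\mathbb{R}^d\to\mathbb{R}$ of the form $f(x)=\Theta^k\circ\sigma\circ\Theta^{k-1}\circ\sigma\circ\cdots\circ\Theta^1\circ\sigma_s\circ\Theta^0(x)$, where $\Theta^j:\mathbb{R}^{n_j}\to\mathbb{R}^{n_{j+1}}$ are affine maps, $n_0=d$, $n_{k+1}=1$, $\sigma=\mathrm{ReLU}$ and $\sigma_s=H$ is the Heaviside step function ($H(t)=1$ for $t\ge0$, $H(t)=0$ for $t<0$), each activation applied componentwise. $k$ is the number of hidden layers and the size of the network is $s=\sum_{0\le i\le k}n_i$. *)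

(* Defs.v *)
From HB Require Import structures.
From mathcomp Require Import all_boot all_order all_algebra.
From mathcomp Require Import reals.
From mathcomp Require Import classical.boolp.
Set Implicit Arguments. Unset Strict Implicit. Unset Printing Implicit Defensive.
Import Order.TTheory GRing.Theory Num.Theory.
Local Open Scope ring_scope.

Section HNN.
Variable R : realType.

Definition heaviside (t : R) : R := if 0 <= t then 1 else 0.
Definition relu (t : R) : R := Num.max t 0.

(* A network in HNN_k with input dimension d and k = k'.+1 hidden layers.
   hw i = n_i is the width of hidden layer i (1 <= i <= k); n_0 = d, n_{k+1} = 1.
   Theta^0 = (W0, b0) : R^d -> R^{n_1};
   Theta^j = (Wh (j-1), bh (j-1)) : R^{n_j} -> R^{n_{j+1}} for 1 <= j < k;
   Theta^k = (Wo, bo) : R^{n_k} -> R.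
   (Wh j, bh j for j >= k' are unused.) *)
Record hnn (d k' : nat) := HNN {
  hw : nat -> nat;
  W0 : 'M[R]_(hw 1, d);
  b0 : 'cV[R]_(hw 1);
  Wh : forall j : nat, 'M[R]_(hw j.+2, hw j.+1);
  bh : forall j : nat, 'cV[R]_(hw j.+2);
  Wo : 'M[R]_(1, hw k'.+1);
  bo : R }.

Fixpoint hnn_hidden d k' (N : hnn d k') (x : 'cV[R]_d) (j : nat)
    : 'cV[R]_(hw N j.+1) :=
  match j with
  | 0 => map_mx heaviside (W0 N *m x + b0 N)
  | j'.+1 => map_mx relu (Wh N j' *m hnn_hidden N x j' + bh N j')
  end.

Definition hnn_eval d k' (N : hnn d k') (x : 'cV[R]_d) : R :=
  (Wo N *m hnn_hidden N x k') 0 0 + bo N.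

Definition hnn_size d k' (N : hnn d k') : nat :=
  (d + \sum_(1 <= i < k'.+2) hw N i)%N.

Definition affinely_independent d (v : 'I_d.+1 -> 'cV[R]_d) : Prop :=
  forall mu : 'I_d.+1 -> R,
    \sum_i mu i = 0 -> \sum_i mu i *: v i = 0 -> forall i, mu i = 0.

Definition simplex d (v : 'I_d.+1 -> 'cV[R]_d) (x : 'cV[R]_d) : Prop :=
  exists lam : 'I_d.+1 -> R,
    (forall i, 0 <= lam i) /\ \sum_i lam i = 1 /\ x = \sum_i lam i *: v i.

Definition charfun d (P : 'cV[R]_d -> Prop) (x : 'cV[R]_d) : R :=
  if `[< P x >] then 1 else 0.
End HNN.

(* Main.v *)
Require Import Defs.
From HB Require Import structures.
From mathcomp Require Import all_boot all_order all_algebra.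
From mathcomp Require Import reals.
From mathcomp Require Import zify.
From mathcomp Require Import classical.boolp.
Import Order.TTheory GRing.Theory Num.Theory.
Local Open Scope ring_scope.

Set Implicit Arguments.
Section Aux.
Variable R : realType.

Definition Mv d (v : 'I_d.+1 -> 'cV[R]_d) : 'M[R]_(d.+1) :=
  \matrix_(i, j) (if unlift ord0 i is Some k then v j k 0 else 1).

Definition ev d (x : 'cV[R]_d) : 'cV[R]_(d.+1) :=
  \col_i (if unlift ord0 i is Some k then x k 0 else 1).

Lemma Mv_inj d (v : 'I_d.+1 -> 'cV[R]_d) : affinely_independent v ->
  forall mu : 'cV[R]_(d.+1), Mv v *m mu = 0 -> mu = 0.
Proof.
move=> hv mu hmu.
have h1 : \sum_i mu i 0 = 0.
  have := congr1 (fun A : 'cV[R]_(d.+1) => A ord0 0) hmu.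
  rewrite !mxE => e; rewrite -[RHS]e; apply: eq_bigr => j _; rewrite !mxE unlift_none mul1r //.
have h2 : \sum_i mu i 0 *: v i = 0.
  apply/matrixP => k z; rewrite ord1 summxE !mxE.
  have := congr1 (fun A : 'cV[R]_(d.+1) => A (lift ord0 k) 0) hmu.
  rewrite !mxE => e; rewrite -[RHS]e; apply: eq_bigr => j _; rewrite !mxE liftK mulrC //.
apply/matrixP => i z; rewrite ord1 mxE; exact: hv h1 h2 i.
Qed.

Lemma Mv_unit d (v : 'I_d.+1 -> 'cV[R]_d) : affinely_independent v ->
  Mv v \in unitmx.
Proof.
move=> hv; rewrite -unitmx_tr -row_free_unit -kermx_eq0; apply/eqP.
apply/row_matrixP => i; rewrite row0.
have : (row i (kermx (Mv v)^T) *m (Mv v)^T) = 0 by apply/sub_kermxP; exact: row_sub.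
move=> h; apply: trmx_inj; rewrite trmx0; apply: (Mv_inj hv).
by have := congr1 trmx h; rewrite trmx_mul trmxK trmx0.
Qed.

Lemma Mv_col d (v : 'I_d.+1 -> 'cV[R]_d) (lam : 'cV[R]_(d.+1)) (x : 'cV[R]_d) :
  \sum_i lam i 0 = 1 -> x = \sum_i lam i 0 *: v i -> Mv v *m lam = ev x.
Proof.
move=> hs hx; apply/matrixP => i z; rewrite ord1 !mxE.
case: (unliftP ord0 i) => [k ->|->].
  rewrite hx summxE; apply: eq_bigr => j _; rewrite !mxE liftK mulrC //.
rewrite -hs; apply: eq_bigr => j _; rewrite !mxE unlift_none mul1r //.
Qed.

Lemma bary d (v : 'I_d.+1 -> 'cV[R]_d) : affinely_independent v ->
  exists (A : 'M[R]_(d.+1, d)) (c : 'cV[R]_(d.+1)),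
    forall x, simplex v x <-> (forall i, 0 <= (A *m x + c) i 0).
Proof.
move=> hv; have hu := Mv_unit hv.
set N := invmx (Mv v).
exists (\matrix_(i, k) N i (lift ord0 k)), (\col_i N i ord0) => x.
have eN : forall i, (\matrix_(i, k) N i (lift ord0 k) *m x + \col_i N i ord0) i 0
   = (N *m ev x) i 0.
  move=> i; rewrite !mxE big_ord_recl /= !mxE unlift_none mulr1 addrC; congr (_ + _).
  by apply: eq_bigr => k _; rewrite !mxE liftK.
split.
  move=> [lam [h0 [h1 h2]]] i; rewrite eN.
  have e : Mv v *m (\col_j lam j) = ev x.
    apply: Mv_col; first by rewrite -h1; apply: eq_bigr => j _; rewrite mxE.
    by rewrite h2; apply: eq_bigr => j _; rewrite mxE.
  by rewrite -e mulmxA mulVmx // mul1mx mxE.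
move=> h; exists (fun i => (N *m ev x) i 0); split; first by move=> i; rewrite -eN.
have eM : Mv v *m (N *m ev x) = ev x by rewrite mulmxA mulmxV // mul1mx.
split.
  have := congr1 (fun A : 'cV[R]_(d.+1) => A ord0 0) eM.
  rewrite !mxE unlift_none => e; rewrite -[RHS]e; apply: eq_bigr => j _; rewrite !mxE unlift_none mul1r //.
apply/matrixP => k z; rewrite ord1 summxE.
have := congr1 (fun A : 'cV[R]_(d.+1) => A (lift ord0 k) 0) eM.
rewrite !mxE liftK => e; rewrite -[LHS]e; apply: eq_bigr => j _; rewrite !mxE liftK mulrC //.
Qed.

Definition hwd (d : nat) (n : nat) : nat := match n with 1 => d.+1 | _ => 1%N end.

Definition net d (A : 'M[R]_(d.+1, d)) (c : 'cV[R]_(d.+1)) : hnn R d 1 :=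
  @HNN R d 1 (hwd d) A c (fun _ => const_mx 1) (fun _ => const_mx (- d%:R))
    (const_mx 1) 0.

Lemma net_size d A c : hnn_size (@net d A c) = (d + (d.+1 + 1))%N.
Proof. by rewrite /hnn_size big_ltn // big_ltn // big_geq // addn0. Qed.

Lemma net_eval d A c x : hnn_eval (@net d A c) x =
  relu (\sum_j heaviside ((A *m x + c) j 0) - d%:R).
Proof.
have e1 : forall f : 'I_1 -> R, \sum_(j < 1) f j = f ord0 by move=> f; rewrite big_ord1.
rewrite /hnn_eval /= !mxE e1 !mxE mul1r addr0.
congr (relu (_ + _)); apply: eq_bigr => j _; rewrite !mxE mul1r //.
Qed.

End Aux.

Theorem mainTheorem12 (R : realType) :
  exists C : nat,
    forall (d : nat), (1 <= d)%N ->
    forall v : 'I_d.+1 -> 'cV[R]_d, affinely_independent v ->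
    exists (k' : nat) (N : hnn R d k'),
      (k'.+1 <= C * up_log 2 d.+1)%N /\
      (hnn_size N <= C * (2 * d.+1))%N /\
      forall x : 'cV[R]_d, hnn_eval N x = charfun (simplex v) x.
Proof.
exists 2%N => d hd v hv.
have [A [c hAc]] := bary hv.
exists 1%N, (@net R d A c); split.
  have : (0 < up_log 2 d.+1)%N by rewrite up_log_gt0 /=.
  lia.
split; first by rewrite net_size; lia.
move=> x; rewrite net_eval /charfun.
have hH : forall t : R, heaviside t <= 1 by move=> t; rewrite /heaviside; case: ifP.
case: asboolP => hs.
  have h := (hAc x).1 hs.
  rewrite (eq_bigr (fun _ => 1)) => [|j _]; last by rewrite /heaviside h.
  rewrite sumr_const card_ord -[1 *+ d.+1]/(d.+1%:R) -natrB // subSnn /relu.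
  by rewrite max_l // ler01.
case: (pselect (exists i, (A *m x + c) i 0 < 0)) => [[i hi]|hn]; last first.
  exfalso; apply: hs; apply/(hAc x) => i; rewrite leNgt; apply/negP => hl; apply: hn; exists i => //.
rewrite (bigD1 i) //= {1}/heaviside leNgt hi /= add0r.
have : \sum_(j | j != i) heaviside ((A *m x + c) j 0) <= \sum_(j | j != i) (1 : R).
  by apply: ler_sum => j _.
rewrite sumr_const.
have -> : #|(fun j : 'I_d.+1 => j != i)| = d.
  by rewrite -[LHS]/#|predC1 i| cardC1 card_ord.
by move=> hle; rewrite /relu max_r // subr_le0.
Qed.
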